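(* Let $t\geq 3$ and $m\geq t$ be integers and let $q$ be a prime power with $q\geq 4t-5$. Then there exists an MS$(q^{m},t)$.
   Context: An $n\times n$ integer matrix $A=(a_{i,j})$ is a general magic square if the sums of the entries in each row, each column, the main diagonal $\{a_{i,i}\}$ and the back diagonal $\{a_{i,n-1-i}\}$ are all equal. For a positive integer $t$, a general magic square $M=(m_{i,j})$ is a general $t$-multimagic square if for every $e=1,\dots,t$ the entrywise power $M^{*e}=(m_{i,j}^{e})$ is a general magic square. A general $t$-multimagic square of order $n$ whose entries are $n^2$ consecutive integers is denoted MS$(n,t)$. *)

(* Defs.v *)
From HB Require Import structures.
From mathcomp Require Import all_boot all_order all_algebra.
Set Implicit Arguments. Unset Strict Implicit. Unset Printing Implicit Defensive.
Import Order.TTheory GRing.Theory Num.Theory.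
Local Open Scope ring_scope.

Definition back_diag_index (n : nat) (i : 'I_n) : 'I_n := rev_ord i.

Definition is_general_magic (n : nat) (A : 'M[int]_n) : Prop :=
  exists s : int,
    (forall i : 'I_n, \sum_(j < n) A i j = s) /\
    (forall j : 'I_n, \sum_(i < n) A i j = s) /\
    (\sum_(i < n) A i i = s) /\
    (\sum_(i < n) A i (back_diag_index i) = s).

Definition entrywise_pow (n : nat) (M : 'M[int]_n) (e : nat) : 'M[int]_n :=
  \matrix_(i, j) (M i j ^+ e).

Definition is_general_multimagic (n t : nat) (M : 'M[int]_n) : Prop :=
  forall e : nat, (1 <= e <= t)%N -> is_general_magic (entrywise_pow M e).

Definition consecutive_entries (n : nat) (M : 'M[int]_n) : Prop :=
  exists a : int,
    forall k : nat, (k < n ^ 2)%N ->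
      exists! ij : 'I_n * 'I_n, M ij.1 ij.2 = a + k%:Z.

Definition MS (n t : nat) (M : 'M[int]_n) : Prop :=
  is_general_multimagic t M /\ consecutive_entries M.

Definition prime_power (q : nat) : Prop :=
  exists p k : nat, prime p /\ (0 < k)%N /\ q = (p ^ k)%N.

(* Main.v *)
Require Import Defs.
From mathcomp Require Import all_boot all_order all_algebra.
From mathcomp Require Import all_field.
From mathcomp Require Import zify ring lra.
Set Implicit Arguments. Unset Strict Implicit. Unset Printing Implicit Defensive.
Import Order.TTheory GRing.Theory Num.Theory.
Local Open Scope ring_scope.

Section Fiber.
Variable F : finFieldType.

Lemma fiber_sum (X Y : finType) (g : {ffun X -> F} -> {ffun Y -> F})
  (gB : forall a b, g (a - b) = g a - g b) (H : {ffun Y -> F} -> int) :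
  \sum_x H (g x) =
  (#|[set x | g x == 0]|)%:R * \sum_(w in [set g x | x in setT]) H w.
Proof.
have g0 : g 0 = 0 by rewrite -(subrr 0) gB subrr.
rewrite (partition_big g (mem [set g x | x in setT])); last first.
  by move=> x _; rewrite inE imset_f.
rewrite mulr_sumr; apply: eq_bigr => w /imsetP [x0 _ ->].
rewrite (eq_bigr (fun _ => H (g x0))); last by move=> x /eqP ->.
rewrite sumr_const mulr_natl; congr (_ *+ _).
have -> : [set x | g x == 0] = [set y - x0 | y : {ffun X -> F} in [set x | g x == g x0]].
  apply/setP => x; rewrite inE; apply/eqP/imsetP.
    move=> gx; exists (x + x0); last exact/esym/addrK.
    have : g (x + x0) - g x0 = g x by rewrite -gB addrK.
    by rewrite gx inE => /eqP; rewrite subr_eq0.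
  by move=> [y]; rewrite inE => /eqP gy ->; rewrite gB gy subrr.
rewrite card_imset; last exact: addIr.
by apply: eq_card => x; rewrite inE.
Qed.

Lemma uniform (X Y : finType) (A : {ffun X -> F} -> {ffun Y -> F})
  (AB : forall a b, A (a - b) = A a - A b) (b : {ffun Y -> F}) (S : {set Y})
  (h : {ffun Y -> F} -> int)
  (hS : forall z z' : {ffun Y -> F}, (forall d, d \in S -> z d = z' d) -> h z = h z')
  (surj : forall w : {ffun Y -> F}, exists x, forall d, d \in S -> A x d = w d) :
  (\sum_x h (A x + b)) * (#|{ffun Y -> F}|)%:R =
  (\sum_z h z) * (#|{ffun X -> F}|)%:R.
Proof.
pose pi (z : {ffun Y -> F}) := [ffun d => if d \in S then z d else 0].
have piB a c : pi (a - c) = pi a - pi c.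
  by apply/ffunP => d; rewrite !ffunE; case: (d \in S); rewrite ?subrr.
have piD a c : pi (a + c) = pi a + pi c.
  by apply/ffunP => d; rewrite !ffunE; case: (d \in S); rewrite ?addr0.
have hpi z : h (pi z) = h z by apply: hS => d dS; rewrite ffunE dS.
pose g x := pi (A x).
have gB a c : g (a - c) = g a - g c by rewrite /g AB piB.
pose H w := h (w + pi b).
have img : [set g x | x in setT] = [set pi z | z in setT].
  apply/setP => w; apply/imsetP/imsetP => [[x _ ->]|[z _ ->]].
    by exists (A x).
  have [x Hx] := surj z; exists x => //; apply/ffunP => d; rewrite !ffunE.
  by case: ifP => // /Hx ->.
have L1 : \sum_x h (A x + b) = \sum_x H (g x).
  by apply: eq_bigr => x _; rewrite /H /g -piD hpi.
have R1 : \sum_z h z = \sum_z H (pi z).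
  rewrite (reindex_inj (addIr b)); apply: eq_bigr => z _.
  by rewrite /H -piD hpi.
have cV : (#|{ffun X -> F}|)%:R = 
   (#|[set x | g x == 0]|)%:R * \sum_(w in [set g x | x in setT]) (1 : int).
  by rewrite -(fiber_sum gB (fun _ => 1)) sumr_const card_ffun.
have cZ : (#|{ffun Y -> F}|)%:R = 
   (#|[set x | pi x == 0]|)%:R * \sum_(w in [set pi x | x in setT]) (1 : int).
  by rewrite -(fiber_sum piB (fun _ => 1)) sumr_const card_ffun.
rewrite L1 R1 cV cZ (fiber_sum gB) (fiber_sum piB) img.
ring.
Qed.

End Fiber.


Section Poly.
Variable F : finFieldType.

Lemma dualvdm (n : nat) (be : F -> F) :
  (#|[set a | be a != 0%R]| <= n)%N ->
  (forall l, (l < n)%N -> \sum_a be a * a ^+ l = 0) -> forall a, be a = 0.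
Proof.
move=> Hs Hz a0; apply/eqP; apply/negPn/negP => Ha0.
pose T := [set a | be a != 0%R] :\ a0.
pose p := \prod_(b <- enum T) ('X - b%:P).
have sp : (size p <= n)%N.
  rewrite size_prod_XsubC -cardE.
  by move: Hs; rewrite (cardsD1 a0) inE Ha0.
have E : \sum_a be a * p.[a] = 0.
  rewrite (eq_bigr (fun a => \sum_(l < n) p`_l * (be a * a ^+ l))); last first.
    by move=> a _; rewrite (horner_coef_wide _ sp) mulr_sumr; apply: eq_bigr => l _; ring.
  rewrite exchange_big big1 // => l _; rewrite -mulr_sumr Hz ?mulr0 //.
have E2 : \sum_a be a * p.[a] = be a0 * p.[a0].
  rewrite (bigD1 a0) //= big1 ?addr0 // => a Ha.
  case: (eqVneq (be a) 0) => [->|Hb]; first by rewrite mul0r.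
  have : root p a by rewrite root_prod_XsubC mem_enum !inE Ha Hb.
  by move/eqP ->; rewrite mulr0.
have : root p a0 = false.
  by rewrite root_prod_XsubC mem_enum !inE eqxx.
move/negbT => /rootPf Hp.
by move: E; rewrite E2 => /eqP; rewrite mulf_eq0 (negPf Ha0) Hp.
Qed.

Lemma polyroots (n : nat) (c : 'I_n -> F) (pt : 'I_n -> F) :
  injective pt -> (forall i, \sum_(l < n) c l * pt i ^+ l = 0) ->
  forall l, c l = 0.
Proof.
move=> ipt Hz.
pose cn (l : nat) := \sum_(o : 'I_n | (o : nat) == l) c o.
have cnE (l : 'I_n) : cn l = c l.
  by rewrite /cn (big_pred1 l) // => o; apply/eqP/eqP => [/val_inj|->].
pose p := \poly_(l < n) cn l.
have pv i : p.[pt i] = 0.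
  rewrite horner_poly -[RHS](Hz i); apply: eq_bigr => l _.
  by rewrite cnE.
have p0 : p = 0.
  apply/eqP/negPn/negP => Hp.
  have H1 : all (root p) [seq pt i | i <- enum 'I_n].
    by apply/allP => x /mapP [i _ ->]; apply/eqP.
  have H2 : uniq [seq pt i | i <- enum 'I_n] by rewrite map_inj_uniq ?enum_uniq.
  have := max_poly_roots Hp H1 H2.
  rewrite size_map -cardE card_ord ltnNge size_poly //.
move=> l; have := congr1 (fun q : {poly F} => q`_l) p0.
by rewrite coef_poly ltn_ord coef0 cnE.
Qed.

Lemma loc_surj (s N : nat) (Des : 'I_s -> 'I_N -> F) (S : {set 'I_N}) :
  (forall al : 'I_N -> F, (forall j, j \notin S -> al j = 0) ->
     (forall l, \sum_j al j * Des l j = 0) -> forall j, al j = 0) ->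
  forall w : 'I_N -> F, exists v : 'I_s -> F,
    forall j, j \in S -> \sum_l v l * Des l j = w j.
Proof.
move=> Hind w.
pose R : 'M[F]_(s, #|S|) := \matrix_(l, c) Des l (enum_val c).
have fr : row_free R^T.
  rewrite -kermx_eq0; apply/eqP/row_matrixP => i; rewrite row0.
  set a := row i _.
  have Ha : a *m R^T = 0 by apply/sub_kermxP; apply: row_sub.
  pose al (j : 'I_N) := \sum_(c | enum_val c == j) a 0 c.
  have al0 : forall j, al j = 0.
    apply: Hind.
      move=> j jS; apply: big1 => c /eqP ec; case/negP: jS; rewrite -ec.
      exact: enum_valP.
    move=> l; have := congr1 (fun M : 'M[F]_(1, s) => M 0 l) Ha; rewrite !mxE => E.
    rewrite -[RHS]E.
    rewrite (eq_bigr (fun j => \sum_(c | enum_val c == j) a 0 c * Des l j)); last first.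
      by move=> j _; rewrite mulr_suml.
    under eq_bigr do rewrite big_mkcond /=.
    rewrite exchange_big /=; apply: eq_bigr => c _.
    rewrite -big_mkcond /= (big_pred1 (enum_val c)) ?mxE //.
  apply/rowP => c; rewrite mxE.
  have := al0 (enum_val c); rewrite /al (big_pred1 c) //.
  by rewrite /a !mxE => ->.
  by move=> c0 /=; rewrite (inj_eq enum_val_inj).
have rf : row_full R by rewrite /row_full -mxrank_tr; exact: fr.
have [B HB] := row_fullP rf.
pose wv : 'rV[F]_#|S| := \row_c w (enum_val c).
exists (fun l => (wv *m B) 0 l) => j jS.
have := congr1 (fun M : 'M[F]_(1, #|S|) => M 0 (enum_rank_in jS j)) (congr1 (fun M : 'M[F]_#|S| => wv *m M) HB).
rewrite mulmxA mulmx1 !mxE enum_rankK_in // => <-.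
by apply: eq_bigr => l _; rewrite /R !mxE enum_rankK_in.
Qed.

End Poly.


Section Design.
Variable F : finFieldType.
Variable t : nat.
Hypothesis t3 : (3 <= t)%N.
Hypothesis qt : (4 * t - 5 <= #|F|)%N.
Local Notation q := #|F|.

Definition pts (i : nat) : F := nth 0 (enum F) i.
Definition point (j : nat) : F := pts (j %% q)%N.
Definition eps (j : nat) : bool := (2 * t <= j)%N.
Definition Des (u : nat) (l : 'I_(t + u)) (j : 'I_(2 * (t + u))) : F :=
  if (l < t)%N then point j ^+ l else if eps j then point j ^+ (l - t) else 0.

Lemma q_gt0 : (0 < q)%N. Proof. lia. Qed.

Lemma pts_inj i i' : (i < q)%N -> (i' < q)%N -> pts i = pts i' -> i = i'.
Proof.
move=> Hi Hi' /eqP; rewrite /pts nth_uniq ?enum_uniq -?cardE //.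
by move/eqP.
Qed.

Lemma point_eq j j' : point j = point j' -> (j %% q = j' %% q)%N.
Proof. by move/pts_inj; apply; rewrite ltn_pmod // q_gt0. Qed.

Section Arith.
Local Open Scope nat_scope.
Lemma DA u j j' : (u < t)%N -> (j < 2 * (t + u))%N -> (j' < 2 * (t + u))%N ->
  j <> j' -> (j %% q = j' %% q)%N -> eps j = ~~ eps j' /\ (t <= 2 * u + 1)%N.
Proof.
move=> Hu Hj Hj' Hne Hm.
have Hq := q_gt0.
have Ej := divn_eq j q; have Ej' := divn_eq j' q.
have Dj : (j %/ q < 2)%N by rewrite ltn_divLR //; lia.
have Dj' : (j' %/ q < 2)%N by rewrite ltn_divLR //; lia.
rewrite /eps.
move: Ej Ej' Dj Dj'; rewrite Hm; set r := (j' %% q)%N.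
case: (j %/ q) => [|[|?]] //; case: (j' %/ q) => [|[|?]] // => Ej Ej' _ _.
- lia.
- split; last lia.
  have -> : (2 * t <= j)%N = false by lia.
  have -> : (2 * t <= j')%N = true by lia.
  by [].
- split; last lia.
  have -> : (2 * t <= j)%N = true by lia.
  have -> : (2 * t <= j')%N = false by lia.
  by [].
- lia.
Qed.
End Arith.

Lemma col_split u (v : 'I_(t + u) -> F) (j : 'I_(2 * (t + u))) :
  \sum_l v l * Des l j =
  \sum_(l < t) v (lshift u l) * point j ^+ l +
  (if eps j then \sum_(l < u) v (rshift t l) * point j ^+ l else 0).
Proof.
rewrite big_split_ord; congr (_ + _).
  by apply: eq_bigr => l _; rewrite /Des /= ltn_ord.
case: ifP => He.
  apply: eq_bigr => l _; rewrite /Des /= He.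
  have -> : (t + l < t)%N = false by lia.
  by rewrite addKn.
apply: big1 => l _; rewrite /Des /= He.
have -> : (t + l < t)%N = false by lia.
by rewrite mulr0.
Qed.


Lemma loc2 u (Hu : (u < t)%N) (ox oy : nat) (Hox : (ox + t <= 2 * t)%N)
  (Hoy : (2 * t <= oy)%N) (Hoy2 : (oy + u <= 2 * (t + u))%N) (v : 'I_(t + u) -> F) :
  (forall j : 'I_(2 * (t + u)), (ox <= j < ox + t)%N -> \sum_l v l * Des l j = 0) ->
  (forall j : 'I_(2 * (t + u)), (oy <= j < oy + u)%N -> \sum_l v l * Des l j = 0) ->
  forall l, v l = 0.
Proof.
move=> Hx Hy.
have Hq := q_gt0.
have f0 : forall l : 'I_t, v (lshift u l) = 0.
  apply: (@polyroots _ t _ (fun i : 'I_t => point (ox + i))).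
    move=> i i' /point_eq; have Hi := ltn_ord i; have Hi' := ltn_ord i'.
    rewrite !modn_small; [|lia|lia].
    by move=> /addnI /val_inj.
  move=> i; have Hi0 := ltn_ord i.
  have Hi : (ox + i < 2 * (t + u))%N by lia.
  have := Hx (Ordinal Hi); rewrite col_split /= /eps.
  have -> : (2 * t <= ox + i)%N = false by lia.
  by rewrite addr0 => ->; rewrite ?leq_addr //= ltn_add2l.
have g0 : forall l : 'I_u, v (rshift t l) = 0.
  apply: (@polyroots _ u _ (fun i : 'I_u => point (oy + i))).
    move=> i i' /point_eq /eqP; have Hi := ltn_ord i; have Hi' := ltn_ord i'.
    rewrite eqn_modDl !modn_small; [|lia|lia].
    by move=> /eqP /val_inj.
  move=> i; have Hi0 := ltn_ord i.
  have Hi : (oy + i < 2 * (t + u))%N by lia.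
  have := Hy (Ordinal Hi); rewrite col_split /= /eps.
  have -> : (2 * t <= oy + i)%N = true by lia.
  rewrite big1 ?add0r; last by move=> l _; rewrite f0 mul0r.
  by move=> ->; rewrite ?leq_addr //= ltn_add2l.
move=> l; case: (splitP l) => [l' El|l' El].
  by rewrite -(f0 l'); congr v; apply: val_inj.
by rewrite -(g0 l'); congr v; apply: val_inj.
Qed.

Lemma regroup (N : nat) (al : 'I_N -> F) (P : pred 'I_N) (G : F -> F) :
  \sum_(j | P j) al j * G (point j) =
  \sum_a (\sum_(j | P j && (point j == a)) al j) * G a.
Proof.
rewrite (partition_big (fun j : 'I_N => point j) predT) //.
apply: eq_bigr => a _; rewrite mulr_suml; apply: eq_bigr => j /andP [_ /eqP ->].
by [].
Qed.

Lemma loc1 u (Hu : (u < t)%N) (S : {set 'I_(2 * (t + u))}) (HS : (#|S| <= t)%N)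
  (al : 'I_(2 * (t + u)) -> F) :
  (forall j, j \notin S -> al j = 0) -> (forall l, \sum_j al j * Des l j = 0) ->
  forall j, al j = 0.
Proof.
move=> Hsupp Hz.
have ex_nz (P : pred 'I_(2 * (t + u))) :
    \sum_(j | P j) al j != 0 -> [exists j, P j && (j \in S)].
  apply: contraR; rewrite negb_exists => /forallP H; apply/eqP.
  apply: big1 => j Pj; apply: Hsupp; move: (H j); rewrite Pj //.
pose bet (a : F) := \sum_(j : 'I_(2 * (t + u)) | predT j && (point j == a)) al j.
pose gam (e : bool) (a : F) := \sum_(j : 'I_(2 * (t + u)) | (eps j == e) && (point j == a)) al j.
have Eb : forall l, (l < t)%N -> \sum_a bet a * a ^+ l = 0.
  move=> l Hl; have Hl' : (l < t + u)%N by lia.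
  rewrite -[RHS](Hz (Ordinal Hl')).
  rewrite -(regroup al predT (fun a => a ^+ l)).
  by apply: eq_big => // j _; rewrite /Des /= Hl.
have Eg : forall l, (l < u)%N -> \sum_a gam true a * a ^+ l = 0.
  move=> l Hl; have Hl' : (t + l < t + u)%N by lia.
  rewrite -[RHS](Hz (Ordinal Hl')).
  rewrite -(regroup al (fun j => eps j == true) (fun a => a ^+ l)).
  rewrite big_mkcond /=; apply: eq_bigr => j _.
  rewrite /Des /=.
  have -> : (t + l < t)%N = false by lia.
  by rewrite addKn; case: (eps j); rewrite ?mulr0.
have b0 : forall a, bet a = 0.
  apply: (dualvdm (n := t)) => //.
  apply: leq_trans HS; apply: leq_trans (leq_imset_card (fun j : 'I_(2 * (t + u)) => point j) S).
  apply: subset_leq_card; apply/subsetP => a; rewrite inE.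
  move=> /ex_nz /existsP [j /andP [/andP [_ /eqP <-] jS]]; exact: imset_f.
have bg a : bet a = gam true a + gam false a.
  rewrite /bet (bigID (fun j : 'I_(2 * (t + u)) => eps j)) /=; congr (_ + _); apply: eq_bigl => j.
    by case: (eps j); rewrite ?andbT ?andbF.
  by case: (eps j); rewrite ?andbT ?andbF.
have gf a : gam false a = - gam true a.
  by apply/eqP; rewrite -addr_eq0 addrC -bg b0.
pose E := [set j : 'I_(2 * (t + u)) | eps j].
pose G := [set a | gam true a != 0].
have G1 : G \subset [set point j | j : 'I_(2 * (t + u)) in S :&: E].
  apply/subsetP => a; rewrite inE.
  move=> /ex_nz /existsP [j /andP [/andP [/eqP e /eqP <-] jS]]; apply: imset_f.
  by rewrite !inE jS e.
have G2 : G \subset [set point j | j : 'I_(2 * (t + u)) in S :\: E].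
  apply/subsetP => a; rewrite inE -oppr_eq0 -gf.
  move=> /ex_nz /existsP [j /andP [/andP [/eqP e /eqP <-] jS]]; apply: imset_f.
  by rewrite !inE jS e.
have cG1 : (#|G| <= #|S :&: E|)%N.
  exact: leq_trans (subset_leq_card G1) (leq_imset_card _ _).
have cG2 : (#|G| <= #|S :\: E|)%N.
  exact: leq_trans (subset_leq_card G2) (leq_imset_card _ _).
have cS := cardsID E S.
have cGu : (#|G| <= u)%N.
  case: (set_0Vmem G) => [->|[a aG]]; first by rewrite cards0.
  have /imsetP [j1 j1S e1] := subsetP G1 a aG.
  have /imsetP [j2 j2S e2] := subsetP G2 a aG.
  move: j1S j2S; rewrite !inE => /andP [_ ej1] /andP [ej2 _].
  have Hne : (nat_of_ord j1) <> j2.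
    by move=> E12; move: ej2; rewrite -E12 ej1.
  have [_ Htu] := DA Hu (ltn_ord j1) (ltn_ord j2) Hne (point_eq (etrans (esym e1) e2)).
  have h1 := leq_add cG1 cG2; rewrite cS in h1.
  have h2 := leq_trans h1 HS; clear -h2 Htu; lia.
have g0 : forall e a, gam e a = 0.
  have gt : forall a, gam true a = 0.
    by apply: (dualvdm (n := u)) => //.
  by case => a //; rewrite gf gt oppr0.
move=> j; rewrite -(g0 (eps j) (point j)) /gam (big_pred1 j) // => j' /=.
apply/andP/eqP => [[/eqP Ee /eqP Ep]|->]; last by rewrite !eqxx.
case: (eqVneq j' j) => // Hne.
have Hne' : (nat_of_ord j') <> j by move=> /val_inj; apply/eqP.
have [He _] := DA Hu (ltn_ord j') (ltn_ord j) Hne' (point_eq Ep).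
by move: Ee; rewrite He; case: (eps j).
Qed.

End Design.


Section Base.
Local Open Scope nat_scope.
Variable q : nat.
Hypothesis q0 : 0 < q.

Lemma base_lt N (a : 'I_N -> nat) : (forall i, a i < q) ->
  \sum_(i < N) a i * q ^ i < q ^ N.
Proof.
elim: N a => [|N IH] a Ha; first by rewrite big_ord0 expn0.
rewrite big_ord_recl /= expn0 muln1.
rewrite (eq_bigr (fun i : 'I_N => q * (a (lift ord0 i) * q ^ i))); last first.
  by move=> i _; rewrite /bump /= add1n expnS; lia.
rewrite -big_distrr /= expnS.
have := IH (fun i => a (lift ord0 i)) (fun i => Ha _).
have := Ha ord0.
set X := \sum_(i < N) _; set Q := q ^ N; move=> h1 h2; nia.
Qed.

Lemma base_inj N (a b : 'I_N -> nat) : (forall i, a i < q) -> (forall i, b i < q) ->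
  \sum_(i < N) a i * q ^ i = \sum_(i < N) b i * q ^ i -> forall i, a i = b i.
Proof.
elim: N a b => [|N IH] a b Ha Hb; first by move=> _ [].
rewrite !big_ord_recl /= !expn0 !muln1.
rewrite (eq_bigr (fun i : 'I_N => q * (a (lift ord0 i) * q ^ i))); last first.
  by move=> i _; rewrite /bump /= add1n expnS; lia.
rewrite [X in _ = _ + X](eq_bigr (fun i : 'I_N => q * (b (lift ord0 i) * q ^ i))); last first.
  by move=> i _; rewrite /bump /= add1n expnS; lia.
rewrite -!big_distrr /=.
set X := \sum_(i < N) _; set Y := \sum_(i < N) _ => E.
have E0 : a ord0 = b ord0.
  have := congr1 (fun m => m %% q) E; rewrite /= !(addnC (_ ord0)) !(mulnC q).
  by rewrite !modnMDl !modn_small ?Ha ?Hb.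
have EXY : X = Y.
  by move: E; rewrite E0 => /addnI /eqP; rewrite eqn_mul2l gtn_eqF //= => /eqP.
have IH' := IH (fun i => a (lift ord0 i)) (fun i => b (lift ord0 i)) (fun i => Ha _) (fun i => Hb _) EXY.
move=> i; case: (unliftP ord0 i) => [j ->|->] //.
Qed.
End Base.


Lemma Tagged_inj (I : eqType) (T_ : I -> Type) (i : I) : injective (Tagged T_ (i:=i)).
Proof.
move=> x y E.
have := @tagged_asE _ _ (Tagged T_ x) y; rewrite /= -E.
by rewrite tagged_asE.
Qed.

Section Global.
Variable F : finFieldType.
Variable t : nat.
Hypothesis t3 : (3 <= t)%N.
Hypothesis qt : (4 * t - 5 <= #|F|)%N.
Variable k : nat.
Variable u : 'I_k -> nat.
Hypothesis Hu : forall i, (u i < t)%N.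
Variables l0 l1 : F.
Hypothesis l01 : l0 != l1.

Definition TK (i : 'I_k) : finType := 'I_(t + u i).
Definition TD (i : 'I_k) : finType := 'I_(2 * (t + u i)).
Definition Kt : finType := {i : 'I_k & TK i}.
Definition Dt : finType := {i : 'I_k & TD i}.

Definition C_def (x : {ffun Kt -> F}) : {ffun Dt -> F} :=
  [ffun d => \sum_(l : 'I_(t + u (tag d))) x (Tagged TK l) * Des F l (tagged d)].
Fact C_key : unit. Proof. exact: tt. Qed.
Definition C := locked_with C_key C_def.
Lemma CE x d : C x d = \sum_(l : 'I_(t + u (tag d))) x (Tagged TK l) * Des F l (tagged d).
Proof. by rewrite /C unlock; exact: ffunE. Qed.

Lemma CB x y : C (x - y) = C x - C y.
Proof.
apply/ffunP => d; rewrite !ffunE !CE -sumrB; apply: eq_bigr => l _.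
by rewrite !ffunE mulrBl.
Qed.

Lemma C_surj (S : {set Dt}) : (#|S| <= t)%N ->
  forall w : {ffun Dt -> F}, exists x, forall d, d \in S -> C x d = w d.
Proof.
move=> HS w.
have loc : forall i, exists v : 'I_(t + u i) -> F,
    forall j : TD i, Tagged TD j \in S -> \sum_l v l * Des F l j = w (Tagged TD j).
  move=> i; pose Si := [set j : TD i | Tagged TD j \in S].
  have cSi : (#|Si| <= t)%N.
    apply: leq_trans HS; rewrite -(card_imset _ (@Tagged_inj _ TD i)).
    by apply: subset_leq_card; apply/subsetP => d /imsetP [j]; rewrite inE => jS ->.
  have [v Hv] := loc_surj (loc1 t3 qt (Hu i) cSi) (fun j => w (Tagged TD j)).
  by exists v => j jS; apply: Hv; rewrite inE.
have [v Hv] := fin_all_exists loc.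
exists [ffun p : Kt => v (tag p) (tagged p)] => -[i j] dS.
rewrite CE /= -(Hv i j dS); apply: eq_bigr => l _; by rewrite ffunE.
Qed.

Definition G1 (u0 j : nat) : bool := ((j < t) || ((2 * t <= j) && (j < 2 * t + u0)))%N.
Definition lam (d : Dt) : F := if G1 (u (tag d)) (tagged d) then l0 else l1.
Definition zf (x y : {ffun Kt -> F}) : {ffun Dt -> F} :=
  [ffun d => C x d + lam d * C y d].

Lemma zfB x y x' y' : zf (x - x') (y - y') = zf x y - zf x' y'.
Proof. by apply/ffunP => d; rewrite !ffunE !CB !ffunE; ring. Qed.

Lemma zf0 x y : zf x y = 0 -> x = 0 /\ y = 0.
Proof.
move=> Z0.
have H (i : 'I_k) (c : F) (ox oy : nat) :
    (ox + t <= 2 * t)%N -> (2 * t <= oy)%N -> (oy + u i <= 2 * (t + u i))%N ->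
    (forall j : 'I_(2 * (t + u i)), (ox <= j < ox + t)%N || (oy <= j < oy + u i)%N ->
       lam (Tagged TD j) = c) ->
    forall l : 'I_(t + u i), x (Tagged TK l) + c * y (Tagged TK l) = 0.
  move=> Hox Hoy Hoy2 Hl.
  have key : forall j : 'I_(2 * (t + u i)),
      (ox <= j < ox + t)%N || (oy <= j < oy + u i)%N ->
      \sum_l (x (Tagged TK l) + c * y (Tagged TK l)) * Des F l j = 0.
    move=> j Hj; have := congr1 (fun z : {ffun Dt -> F} => z (Tagged TD j)) Z0.
    rewrite !ffunE Hl // !CE /= => E; rewrite -[RHS]E.
    rewrite mulr_sumr -big_split /=; apply: eq_bigr => l _; ring.
  apply: (loc2 t3 qt (Hu i) Hox Hoy Hoy2 (v := fun l => x (Tagged TK l) + c * y (Tagged TK l))).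
    by move=> j Hj; apply: key; rewrite Hj.
  by move=> j Hj; apply: key; rewrite Hj orbT.
have E1 i (l : 'I_(t + u i)) : x (Tagged TK l) + l0 * y (Tagged TK l) = 0.
  apply: (H i l0 0 (2 * t)) => //; try lia.
  move=> j; rewrite /lam /G1 /= => /orP [|] Hj.
    by have -> : (j < t)%N by lia.
  have -> : ((2 * t <= j) && (j < 2 * t + u i))%N by lia.
  by rewrite orbT.
have E2 i (l : 'I_(t + u i)) : x (Tagged TK l) + l1 * y (Tagged TK l) = 0.
  apply: (H i l1 t (2 * t + u i)) => //; try lia.
  move=> j; rewrite /lam /G1 /= => Hj.
  have -> : ((j < t) || (2 * t <= j) && (j < 2 * t + u i))%N = false by lia.
  by [].
have Ey i (l : 'I_(t + u i)) : y (Tagged TK l) = 0.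
  have : (l0 - l1) * y (Tagged TK l) =
    (x (Tagged TK l) + l0 * y (Tagged TK l)) - (x (Tagged TK l) + l1 * y (Tagged TK l)).
    by ring.
  rewrite E1 E2 subrr => /eqP; rewrite mulf_eq0 subr_eq0 (negPf l01) /=.
  by move/eqP.
have Ex i (l : 'I_(t + u i)) : x (Tagged TK l) = 0.
  by have := E1 i l; rewrite Ey mulr0 addr0.
by split; apply/ffunP => -[i l]; rewrite ffunE ?Ex ?Ey.
Qed.

Lemma zf_inj x y x' y' : zf x y = zf x' y' -> x = x' /\ y = y'.
Proof.
move=> E; have : zf (x - x') (y - y') = 0 by rewrite zfB E subrr.
move=> /zf0 [/eqP + /eqP]; rewrite !subr_eq0 => /eqP -> /eqP ->.
by [].
Qed.

Local Notation q := #|F|.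
Local Notation Vt := {ffun Kt -> F}.
Local Notation Zt := {ffun Dt -> F}.

Definition digit (z : Zt) (d : Dt) : nat := enum_rank (z d).
Definition valz (z : Zt) : nat := \sum_(d : Dt) digit z d * q ^ (enum_rank d).
Definition wint (d : Dt) (z : Zt) : int := (digit z d * q ^ enum_rank d)%:R.

Lemma powE (e : nat) (z : Zt) :
  ((valz z)%:R : int) ^+ e = \sum_(f : {ffun 'I_e -> Dt}) \prod_(i : 'I_e) wint (f i) z.
Proof.
rewrite /valz natr_sum -{1}(card_ord e) -prodr_const.
by rewrite bigA_distr_bigA.
Qed.

Lemma uniform_pow (mu : Dt -> F) (Hmu : forall d, mu d != 0) (b : Zt) (e : nat)
  (He : (e <= t)%N) :
  (\sum_(x : Vt) ((valz ([ffun d => mu d * C x d] + b))%:R : int) ^+ e) * (#|Zt|)%:R =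
  (\sum_(z : Zt) ((valz z)%:R : int) ^+ e) * (#|Vt|)%:R.
Proof.
under eq_bigr do rewrite powE.
under [X in _ = X * _]eq_bigr do rewrite powE.
rewrite exchange_big [X in _ = X * _]exchange_big /= !mulr_suml.
apply: eq_bigr => f _.
pose A (x : Vt) : Zt := [ffun d => mu d * C x d].
apply: (@uniform F _ _ A _ b [set f i | i : 'I_e]).
- by move=> x y; apply/ffunP => d; rewrite !ffunE CB !ffunE mulrBr.
- move=> z z' H; apply: eq_bigr => i _; rewrite /wint /digit H //.
  exact: imset_f.
- move=> w.
  have cS : (#|[set f i | i : 'I_e]| <= t)%N.
    by apply: leq_trans (leq_imset_card _ _) _; rewrite card_ord.
  have [x Hx] := C_surj cS [ffun d => (mu d)^-1 * w d].
  exists x => d dS; rewrite ffunE Hx // ffunE mulVKf //.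
Qed.

Lemma valz_reindex z : valz z = (\sum_(i < #|Dt|) digit z (enum_val i) * q ^ i)%N.
Proof.
rewrite /valz (reindex (enum_val : 'I_#|Dt| -> Dt)) /=; last exact: onW_bij (enum_val_bij _).
by apply: eq_bigr => i _; rewrite enum_valK.
Qed.

Lemma digit_lt z d : (digit z d < q)%N.
Proof. by rewrite /digit ltn_ord. Qed.

Lemma qpos : (0 < q)%N.
Proof. lia. Qed.

Lemma valz_lt z : (valz z < q ^ #|Dt|)%N.
Proof. by rewrite valz_reindex; apply: (base_lt qpos) => i; apply: digit_lt. Qed.

Lemma valz_inj : injective valz.
Proof.
move=> z z' E; apply/ffunP => d.
have := base_inj qpos (fun i => digit_lt _ _) (fun i => digit_lt _ _)
  (etrans (esym (valz_reindex z)) (etrans E (valz_reindex z'))) (enum_rank d).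
by rewrite /digit enum_rankK => /val_inj /enum_rank_inj.
Qed.

Hypotheses (l0n : l0 != 0) (l1n : l1 != 0) (l0p : 1 + l0 != 0) (l1p : 1 + l1 != 0)
  (l0m : 1 - l0 != 0) (l1m : 1 - l1 != 0).

Lemma lam_n d : lam d != 0. Proof. by rewrite /lam; case: ifP. Qed.
Lemma lam_p d : 1 + lam d != 0. Proof. by rewrite /lam; case: ifP. Qed.
Lemma lam_m d : 1 - lam d != 0. Proof. by rewrite /lam; case: ifP. Qed.

Section Lines.
Variable e : nat.
Hypothesis He : (e <= t)%N.
Let T := \sum_(z : Zt) ((valz z)%:R : int) ^+ e.
Let VV : int := (#|Vt|)%:R.
Let ZZ : int := (#|Zt|)%:R.

Lemma rowL x0 : (\sum_(y : Vt) ((valz (zf x0 y))%:R : int) ^+ e) * ZZ = T * VV.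
Proof.
rewrite -(uniform_pow lam_n (C x0) He); congr (_ * _); apply: eq_bigr => y _.
by congr (_ ^+ _); congr (_%:R); congr valz; apply/ffunP => d; rewrite !ffunE addrC.
Qed.

Lemma colL y0 : (\sum_(x : Vt) ((valz (zf x y0))%:R : int) ^+ e) * ZZ = T * VV.
Proof.
rewrite -(@uniform_pow (fun _ => 1) (fun _ => oner_neq0 _) [ffun d => lam d * C y0 d] _ He).
congr (_ * _); apply: eq_bigr => x _.
by congr (_ ^+ _); congr (_%:R); congr valz; apply/ffunP => d; rewrite !ffunE mul1r.
Qed.

Lemma diagL : (\sum_(x : Vt) ((valz (zf x x))%:R : int) ^+ e) * ZZ = T * VV.
Proof.
rewrite -(@uniform_pow (fun d => 1 + lam d) lam_p 0 _ He).
congr (_ * _); apply: eq_bigr => x _.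
by congr (_ ^+ _); congr (_%:R); congr valz; apply/ffunP => d; rewrite !ffunE; ring.
Qed.

Lemma antiL (one : Vt) :
  (\sum_(x : Vt) ((valz (zf x (one - x)))%:R : int) ^+ e) * ZZ = T * VV.
Proof.
rewrite -(@uniform_pow (fun d => 1 - lam d) lam_m [ffun d => lam d * C one d] _ He).
congr (_ * _); apply: eq_bigr => x _.
by congr (_ ^+ _); congr (_%:R); congr valz; apply/ffunP => d; rewrite !ffunE CB !ffunE; ring.
Qed.

Lemma ZZ0 : ZZ != 0.
Proof. by rewrite /ZZ pnatr_eq0 -lt0n card_ffun expn_gt0 qpos. Qed.

End Lines.

Variable n : nat.
Variable beta : 'I_n -> Vt.
Hypothesis beta_bij : bijective beta.
Hypothesis beta_rev : forall i, beta (rev_ord i) = [ffun _ => 1] - beta i.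
Hypothesis Hn2 : (n ^ 2 = q ^ #|Dt|)%N.

Lemma sum_beta (G : Vt -> int) : \sum_(j : 'I_n) G (beta j) = \sum_(y : Vt) G y.
Proof. by rewrite (reindex beta) //; exact: onW_bij. Qed.

Theorem assemble : exists M : 'M[int]_n, MS t M.
Proof.
pose M : 'M[int]_n := \matrix_(i, j) ((valz (zf (beta i) (beta j)))%:R).
exists M; split.
  move=> e /andP [_ He].
  pose s := \sum_(y : Vt) ((valz (zf 0 y))%:R : int) ^+ e.
  have key L : L * (#|Zt|)%:R = (\sum_(z : Zt) ((valz z)%:R : int) ^+ e) * (#|Vt|)%:R ->
      L = s.
    by move=> HL; apply: (mulIf ZZ0); rewrite HL rowL.
  exists s; split; [|split; [|split]].
  - move=> i; apply: key; rewrite -(rowL He (beta i)); congr (_ * _).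
    by rewrite -(sum_beta (fun y => ((valz (zf (beta i) y))%:R : int) ^+ e));
       apply: eq_bigr => j _; rewrite !mxE.
  - move=> j; apply: key; rewrite -(colL He (beta j)); congr (_ * _).
    by rewrite -(sum_beta (fun x => ((valz (zf x (beta j)))%:R : int) ^+ e));
       apply: eq_bigr => i _; rewrite !mxE.
  - apply: key; rewrite -(diagL He); congr (_ * _).
    by rewrite -(sum_beta (fun x => ((valz (zf x x))%:R : int) ^+ e));
       apply: eq_bigr => i _; rewrite !mxE.
  - apply: key; rewrite -(antiL He [ffun _ => 1]); congr (_ * _).
    rewrite -(sum_beta (fun x => ((valz (zf x ([ffun _ => 1] - x)))%:R : int) ^+ e)).
    by apply: eq_bigr => i _; rewrite !mxE /back_diag_index beta_rev.
exists 0 => kk Hk.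
have [bi bK Kb] := beta_bij.
have Hlt (p : 'I_n * 'I_n) : (valz (zf (beta p.1) (beta p.2)) < n ^ 2)%N.
  by rewrite Hn2 valz_lt.
pose Phi (p : 'I_n * 'I_n) : 'I_(n ^ 2) := Ordinal (Hlt p).
have Phi_inj : injective Phi.
  move=> [a b] [c d] /(congr1 val) /= /valz_inj /zf_inj [E1 E2].
  by rewrite -(bK a) -(bK b) E1 E2 !bK.
have Hc : (#|'I_(n ^ 2)| <= #|{: 'I_n * 'I_n}|)%N.
  by rewrite card_ord card_prod card_ord mulnn.
have /codomP [p Hp] := inj_card_onto Phi_inj Hc (Ordinal Hk).
exists p; split.
  by rewrite !mxE add0r -natz; congr (_%:R); move: Hp => /(congr1 val) /= ->.
move=> p' Hp'; apply: Phi_inj; apply: val_inj => /=.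
have e1 := congr1 val Hp; rewrite /= in e1; rewrite -e1.
by move: Hp'; rewrite !mxE add0r -natz => /eqP; rewrite eqr_nat => /eqP ->.
Qed.

End Global.


Section Inv.
Local Open Scope nat_scope.
Variables (A B : finType) (b0 : B) (sg : A -> A) (tau : B -> B).
Hypotheses (isg : involutive sg) (itau : involutive tau).
Let FA := [set a | sg a == a].
Let FB := [set b | tau b == b].

Let Good (X : {set A}) (Y : {set B}) (f : A -> B) :=
  (forall a, a \in X -> f (sg a) = tau (f a)) /\ {in X &, injective f} /\
  (forall a, a \in X -> f a \in Y).

Lemma inv_main N (X : {set A}) (Y : {set B}) : (#|X| <= N)%N ->
  (forall a, a \in X -> sg a \in X) -> (forall b, b \in Y -> tau b \in Y) ->
  #|X| = #|Y| -> #|X :&: FA| = #|Y :&: FB| -> exists f, Good X Y f.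
Proof.
elim: N X Y => [|N IH] X Y HN cX cY cXY cXYF.
  have X0 : X = set0 by apply/cards0_eq; lia.
  by exists (fun _ => b0); split; [|split] => [x|x y|x]; rewrite X0 inE.
case: (set_0Vmem X) => [X0|[a aX]].
  by exists (fun _ => b0); split; [|split] => [x|x y|x]; rewrite X0 inE.
have sgne x y : x != y -> sg x != sg y.
  by apply: contra => /eqP /(can_inj isg) ->.
have tne x y : x != y -> tau x != tau y.
  by apply: contra => /eqP /(can_inj itau) ->.
case: (eqVneq (sg a) a) => Ha.
- have : (0 < #|Y :&: FB|)%N.
    by rewrite -cXYF; apply/card_gt0P; exists a; rewrite !inE aX Ha eqxx.
  case/card_gt0P => b; rewrite !inE => /andP [bY /eqP Hb].
  have [|||||f' [H1 [H2 H3]]] := IH (X :\ a) (Y :\ b).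
  + by move: HN; rewrite (cardsD1 a X) aX.
  + move=> x; rewrite !inE => /andP [xa xX]; rewrite cX // andbT.
    by rewrite -Ha; apply: sgne.
  + move=> y; rewrite !inE => /andP [yb yY]; rewrite cY // andbT.
    by rewrite -Hb; apply: tne.
  + by move: cXY; rewrite (cardsD1 a X) (cardsD1 b Y) aX bY => -[].
  + have e1 : (X :\ a) :&: FA = (X :&: FA) :\ a.
      by apply/setP => x; rewrite !inE andbA.
    have e2 : (Y :\ b) :&: FB = (Y :&: FB) :\ b.
      by apply/setP => x; rewrite !inE andbA.
    move: cXYF; rewrite e1 e2 (cardsD1 a (X :&: FA)) (cardsD1 b (Y :&: FB)).
    by rewrite !inE aX bY Ha Hb !eqxx => -[].
  exists (fun x => if x == a then b else f' x); split; [|split].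
  + move=> x xX; case: (eqVneq x a) => [->|xa]; first by rewrite Ha eqxx Hb.
    have sxa : sg x != a by rewrite -Ha; apply: sgne.
    by rewrite (negPf sxa) H1 // !inE xa.
  + move=> x y xX yX /=.
    case: (eqVneq x a) => [->|xa]; case: (eqVneq y a) => [->|ya] //.
    * move=> E; have := H3 y; rewrite !inE ya yX -E eqxx => /(_ erefl) //.
    * move=> E; have := H3 x; rewrite !inE xa xX E eqxx => /(_ erefl) //.
    * by apply: H2; rewrite !inE ?xa ?ya.
  + move=> x xX; case: (eqVneq x a) => [_|xa]; first by [].
    by have := H3 x; rewrite !inE xa xX => /(_ erefl) /andP [].
- have : (0 < #|Y :\: FB|)%N.
    have h1 := cardsID FA X; have h2 := cardsID FB Y.
    have : (0 < #|X :\: FA|)%N by apply/card_gt0P; exists a; rewrite !inE aX Ha.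
    lia.
  case/card_gt0P => b; rewrite !inE => /andP [Hb bY].
  have sa : sg a \in X :\ a by rewrite !inE Ha cX.
  have tb : tau b \in Y :\ b by rewrite !inE Hb cY.
  have [|||||f' [H1 [H2 H3]]] := IH (X :\ a :\ sg a) (Y :\ b :\ tau b).
  + by move: HN; rewrite (cardsD1 a X) (cardsD1 (sg a) (X :\ a)) aX sa; lia.
  + move=> x; rewrite !inE => /andP [xsa /andP [xa xX]]; rewrite cX // andbT.
    by rewrite sgne //= -(isg a) sgne.
  + move=> y; rewrite !inE => /andP [ytb /andP [yb yY]]; rewrite cY // andbT.
    by rewrite tne //= -(itau b) tne.
  + move: cXY; rewrite (cardsD1 a X) (cardsD1 (sg a) (X :\ a)) aX sa.
    by rewrite (cardsD1 b Y) (cardsD1 (tau b) (Y :\ b)) bY tb => -[].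
  + have e1 : (X :\ a :\ sg a) :&: FA = X :&: FA.
      apply/setP => x; rewrite !inE.
      case: (eqVneq x (sg a)) => [->|_] /=; first by rewrite isg eq_sym (negPf Ha) andbF.
      case: (eqVneq x a) => [->|_] //=; by rewrite (negPf Ha) andbF.
    have e2 : (Y :\ b :\ tau b) :&: FB = Y :&: FB.
      apply/setP => y; rewrite !inE.
      case: (eqVneq y (tau b)) => [->|_] /=; first by rewrite itau eq_sym (negPf Hb) andbF.
      case: (eqVneq y b) => [->|_] //=; by rewrite (negPf Hb) andbF.
    by rewrite e1 e2.
  pose f x := if x == a then b else if x == sg a then tau b else f' x.
  have fo x : x \in X -> x != a -> x != sg a -> f x = f' x /\ f' x \in Y /\
      f' x != b /\ f' x != tau b.
    move=> xX xa xsa; rewrite /f (negPf xa) (negPf xsa); split => //.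
    by have := H3 x; rewrite !inE xa xsa xX => /(_ erefl) /and3P [-> -> ->].
  exists f; split; [|split].
  + move=> x xX; rewrite /f.
    case: (eqVneq x a) => [->|xa]; first by rewrite (negPf Ha) eqxx.
    case: (eqVneq x (sg a)) => [->|xsa]; first by rewrite isg eqxx itau.
    have sxa : sg x != a by rewrite -(isg a) sgne.
    have sxsa : sg x != sg a by rewrite sgne.
    by rewrite (negPf sxa) (negPf sxsa) H1 // !inE xa xsa xX.
  + move=> x y xX yX E.
    have fb z : z \in X -> (f z == b) = (z == a).
      move=> zX; rewrite /f; case: (eqVneq z a) => [_|za]; first by rewrite eqxx.
      case: (eqVneq z (sg a)) => [_|zsa]; first by rewrite (negPf Hb).
      by have [_ [_ [h _]]] := fo z zX za zsa; rewrite (negPf h).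
    have ftb z : z \in X -> (f z == tau b) = (z == sg a).
      move=> zX; rewrite /f; case: (eqVneq z a) => [->|za].
        by rewrite eq_sym (negPf Hb) eq_sym (negPf Ha).
      case: (eqVneq z (sg a)) => [_|zsa]; first by rewrite eqxx.
      by have [_ [_ [_ h]]] := fo z zX za zsa; rewrite (negPf h).
    case: (eqVneq x a) => [xa|xa].
      have : f y == b by rewrite -E fb // xa.
      by rewrite fb // => /eqP ->.
    case: (eqVneq x (sg a)) => [xsa|xsa].
      have : f y == tau b by rewrite -E ftb // xsa.
      by rewrite ftb // => /eqP ->.
    have ya : y != a by rewrite -fb // -E fb.
    have ysa : y != sg a by rewrite -ftb // -E ftb.
    have [e1 _] := fo x xX xa xsa; have [e2 _] := fo y yX ya ysa.
    apply: H2; rewrite ?inE ?xa ?xsa ?ya ?ysa //.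
    by rewrite -e1 -e2.
  + move=> x xX; rewrite /f.
    case: (eqVneq x a) => [_|xa] //; case: (eqVneq x (sg a)) => [_|xsa].
      by move: tb; rewrite inE => /andP [].
    by have [_ [h _]] := fo x xX xa xsa.
Qed.

Lemma inv_conj : #|A| = #|B| -> #|FA| = #|FB| ->
  exists f : A -> B, bijective f /\ forall a, f (sg a) = tau (f a).
Proof.
move=> cAB cF.
have [|||||f [H1 [H2 _]]] := @inv_main #|A| [set: A] [set: B].
- by rewrite cardsT.
- by move=> a; rewrite inE.
- by move=> b; rewrite inE.
- by rewrite !cardsT.
- by rewrite !setTI.
exists f; split; last by move=> a; apply: H1; rewrite inE.
apply: inj_card_bij; last by rewrite cAB.
by move=> x y; apply: H2; rewrite inE.
Qed.
End Inv.


Lemma card_sig (I : finType) (T_ : I -> finType) :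
  #|{: {i : I & T_ i}}| = (\sum_i #|T_ i|)%N.
Proof. by rewrite card_tagged sumnE big_map big_enum. Qed.

Lemma card_b (T : finType) (A : {set T}) (b : bool) :
  (forall x y, x \in A -> y \in A -> x = y) -> ((exists x, x \in A) <-> b) ->
  #|A| = b.
Proof.
move=> Hu Hb; case: b Hb => Hb.
  have [x xA] := proj2 Hb erefl.
  apply/eqP; rewrite eqn_leq; apply/andP; split.
    by apply/card_le1_eqP => y z yA zA; apply: Hu.
  by apply/card_gt0P; exists x.
apply/eqP; rewrite cards_eq0; apply/eqP/setP => x; rewrite inE.
by apply/negbTE/negP => xA; have := proj1 Hb (ex_intro _ x xA).
Qed.

Lemma ex_notin (F : finType) (s : seq F) : (size s < #|F|)%N -> exists x, x \notin s.
Proof.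
move=> Hs; case: (pickP (fun x => x \notin s)) => [x Hx|H]; first by exists x.
have : (#|F| <= size s)%N.
  apply: leq_trans (card_size s); apply: subset_leq_card; apply/subsetP => x _.
  by move: (H x) => /negbFE.
lia.
Qed.

Lemma rev_fix (n : nat) : #|[set i : 'I_n | rev_ord i == i]| = odd n.
Proof.
apply: card_b.
  move=> i j; rewrite !inE => /eqP/(congr1 val) /= Hi /eqP/(congr1 val) /= Hj.
  apply: ord_inj; have := ltn_ord i; have := ltn_ord j; lia.
split.
  move=> [i]; rewrite inE => /eqP/(congr1 val) /= Hi.
  have -> : n = (i.*2).+1 by rewrite -addnn; have := ltn_ord i; lia.
  by rewrite /= odd_double.
move=> on; have Hn := odd_double_half n; rewrite on -muln2 in Hn.
have Hl : (n./2 < n)%N by lia.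
exists (Ordinal Hl); rewrite inE; apply/eqP/ord_inj => /=; lia.
Qed.

Lemma corollary_core (t m q : nat) :
  (3 <= t)%N -> (t <= m)%N -> prime_power q -> (4 * t - 5 <= q)%N ->
  exists M : 'M[int]_(q ^ m)%N, MS t M.
Proof.
move=> t3 tm [p [k0 [pp [k0p ->]]]] qt.
have [F pF cF] := pPrimePowerField pp k0p.
rewrite -cF in qt *.
have t0 : (0 < t)%N by lia.
pose kk := (m %/ t)%N; pose r := (m %% t)%N.
have kk0 : (0 < kk)%N by rewrite divn_gt0.
pose u (i : 'I_kk) := if (i : nat) == 0%N then r else 0%N.
have Hu : forall i, (u i < t)%N.
  by move=> i; rewrite /u; case: ifP => _ //; rewrite ltn_pmod.
have q6 : (6 < #|F|)%N by lia.
have [l0 Hl0] : exists x : F, x \notin [:: 0; 1; -1] by apply: ex_notin; apply: leq_trans q6.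
have [l1 Hl1] : exists x : F, x \notin [:: 0; 1; -1; l0] by apply: ex_notin; apply: leq_trans q6.
move: Hl0 Hl1; rewrite !inE !negb_or => /and3P [l0n l0p l0m] /and4P [l1n l1p l1m l01].
have p0 (x : F) : x != -1 -> 1 + x != 0 by rewrite addrC addr_eq0.
have m0 (x : F) : x != 1 -> 1 - x != 0 by rewrite subr_eq0 eq_sym.
have cK : #|Kt t u| = m.
  rewrite /Kt card_sig (eq_bigr (fun i => t + u i)%N); last by move=> i _; rewrite card_ord.
  rewrite big_split /= sum_nat_const card_ord.
  rewrite (bigD1 (Ordinal kk0)) //= big1 ?addn0; last first.
    by move=> i /negPf Hi; rewrite /u; case: eqP => // E; move: Hi; rewrite -val_eqE /= E.
  by rewrite /u /= /kk /r mulnC [in RHS](divn_eq m t) mulnC.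
have hs : (\sum_i (t + u i))%N = m.
  by rewrite -cK /Kt card_sig; apply: eq_bigr => i _; rewrite card_ord.
have cD : #|Dt t u| = (2 * m)%N.
  rewrite /Dt card_sig (eq_bigr (fun i => 2 * (t + u i))%N); last by move=> i _; rewrite card_ord.
  by rewrite -big_distrr /= hs.
pose n := (#|F| ^ m)%N.
pose tau (x : {ffun Kt t u -> F}) : {ffun Kt t u -> F} := [ffun=> 1] - x.
have itau : involutive tau.
  by move=> x; apply/ffunP => y; rewrite /tau !ffunE; ring.
have [p1 _] : exists p1 : Kt t u, p1 \in Kt t u.
  by apply/card_gt0P; rewrite cK (leq_trans t0 tm).
have fix1 x : tau x == x -> forall y, x y * 2%:R = 1.
  move=> /eqP H y; have := congr1 (fun f : {ffun Kt t u -> F} => f y) H.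
  by rewrite /tau !ffunE => E; rewrite mulr_natr mulr2n -{1}E subrK.
have fix2 x : tau x == x -> (2%:R : F) != 0.
  move=> Hx; apply/negP => /eqP H2; have := fix1 x Hx p1.
  by rewrite H2 mulr0 => /eqP; rewrite eq_sym oner_eq0.
have fix3 x : tau x == x -> x = [ffun=> (2%:R : F)^-1].
  move=> Hx; apply/ffunP => y; apply: (mulIf (fix2 x Hx)).
  by rewrite ffunE mulVf ?(fix2 x Hx) //; apply: fix1.
have cFB : #|[set x | tau x == x]| = ((2%:R : F) != 0).
  apply: card_b.
    by move=> x y; rewrite !inE => /fix3 -> /fix3 ->.
  split; first by move=> [x]; rewrite inE => /fix2.
  move=> H2; exists [ffun=> (2%:R : F)^-1]; rewrite inE.
  apply/eqP/ffunP => y; rewrite /tau !ffunE.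
  have h : (2%:R : F)^-1 * 2%:R = 1 by rewrite mulVf.
  by rewrite -{1}h; ring.
have cFA := rev_fix n.
have oF : odd n = ((2%:R : F) != 0).
  rewrite /n cF !oddX eqn0Ngt (leq_trans t0 tm) eqn0Ngt k0p.
  rewrite /= -(dvdn_pcharf pF 2).
  case: (even_prime pp) => [->|op] //.
  rewrite op; apply/esym/negP => /(dvdn_leq (isT : (0 < 2)%N)) Hp2.
  have := prime_gt1 pp => Hp1.
  have E : p = 2%N by apply/eqP; rewrite eqn_leq Hp2 Hp1.
  by move: op; rewrite E.
have [beta [bb br]] := @inv_conj 'I_n {ffun Kt t u -> F} 0 _ _ (@rev_ordK n) itau
  ltac:(by rewrite card_ord card_ffun cK) ltac:(by rewrite cFA cFB oF).
apply: (assemble t3 qt Hu _ l0n l1n (p0 _ l0m) (p0 _ l1m) (m0 _ l0p) (m0 _ l1p) bb br).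
  by rewrite eq_sym.
by rewrite cD /n -expnM mulnC.
Qed.

Local Close Scope ring_scope.

Theorem corollary4p2 (t m q : nat) :
  (3 <= t)%N -> (t <= m)%N -> prime_power q -> (4 * t - 5 <= q)%N ->
  exists M : 'M[int]_(q ^ m), MS t M.
Proof. exact: corollary_core. Qed.
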